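(* Let $\Omega>0$, let $0<\sigma\leq m_{\min}$, let $n\geq 2$ be an integer and set \[ \tau=\frac{e^{-1}}{\Omega}\Big(\frac{\sigma}{m_{\min}}\Big)^{\frac{1}{2n-1}}. \] Then there exist a positive discrete measure $\mu=\sum_{j=1}^{n}a_j \delta_{y_j}$ (all $a_j>0$) whose $n$ supports are the points $-(n-\tfrac12)\tau+2k\tau$, $k=0,1,\dots,n-1$ (i.e. $-(n-\frac{1}{2})\tau, -(n-\frac{5}{2})\tau, \dots, (n-\frac{3}{2})\tau$), and a positive discrete measure $\hat \mu=\sum_{j=1}^{n}\hat a_j \delta_{\hat y_j}$ (all $\hat a_j>0$) whose $n$ supports are the points $-(n-\tfrac32)\tau+2k\tau$, $k=0,1,\dots,n-1$ (i.e. $-(n-\frac{3}{2})\tau, -(n-\frac{7}{2})\tau,\dots, (n-\frac{1}{2})\tau$), such that \[ \max_{\omega\in[-\Omega,\Omega]}\big|\mathcal F[\hat \mu](\omega)- \mathcal F[\mu](\omega)\big|< \sigma, \qquad \min_{1\leq j\leq n}|a_j|= m_{\min}. \]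
   Context: For a discrete measure $\nu=\sum_{j} c_j\delta_{x_j}$ on $\mathbb R$, its Fourier transform is $\mathcal F[\nu](\omega)=\sum_j c_j e^{i x_j\omega}$, $\omega\in\mathbb R$. Here $\Omega>0$ is the cutoff frequency, $\sigma>0$ the noise level and $m_{\min}>0$ a prescribed minimal amplitude. *)

(* Defs.v *)
From Stdlib Require Import Reals.
From Coquelicot Require Import Coquelicot.
Open Scope R_scope.

Definition cexpi (t : R) : C := (cos t, sin t).

Fixpoint csum (f : nat -> C) (n : nat) : C :=
  match n with
  | O => 0%C
  | S k => (csum f k + f k)%C
  end.

(* Fourier transform of the discrete measure  sum_{j<n} c_j delta_{x_j}:
   F[nu](w) = sum_{j<n} c_j e^{i x_j w} *)
Definition fourier_discrete (n : nat) (c x : nat -> R) (w : R) : C :=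
  csum (fun j => (RtoC (c j) * cexpi (x j * w))%C) n.

(* Main.v *)
Require Import Defs.
From Stdlib Require Import Reals Lra Lia.
From Coquelicot Require Import Coquelicot.
Open Scope R_scope.

Fixpoint bn (m k : nat) : nat :=
  match m, k with
  | _, O => 1%nat
  | O, S _ => 0%nat
  | S m', S k' => (bn m' k' + bn m' (S k'))%nat
  end.

Lemma bn_0 : forall m, bn m 0 = 1%nat.
Proof. destruct m; reflexivity. Qed.

Lemma bn_big : forall m k, (m < k)%nat -> bn m k = 0%nat.
Proof.
  induction m; intros k H; destruct k; simpl; try lia; auto.
  rewrite !IHm; lia.
Qed.

Lemma bn_pos : forall m k, (k <= m)%nat -> (1 <= bn m k)%nat.
Proof.
  induction m; intros k H; destruct k; simpl; try lia.
  specialize (IHm k). lia.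
Qed.

Lemma csum_ext : forall (f g : nat -> C) L, (forall k, (k < L)%nat -> f k = g k) -> csum f L = csum g L.
Proof.
  intros f g L; induction L; intros H; simpl; auto.
  rewrite IHL by (intros; apply H; lia). rewrite H by lia. auto.
Qed.

Lemma csum_plus : forall (f g : nat -> C) L, csum (fun k => f k + g k)%C L = (csum f L + csum g L)%C.
Proof. intros f g L; induction L; simpl. ring. rewrite IHL. ring. Qed.

Lemma csum_scal : forall c (f : nat -> C) L, csum (fun k => c * f k)%C L = (c * csum f L)%C.
Proof. intros c f L; induction L; simpl. ring. rewrite IHL. ring. Qed.

Lemma csum_shift : forall (f : nat -> C) L, csum f (S L) = (f O + csum (fun k => f (S k)) L)%C.
Proof. intros f L; induction L; simpl. ring. simpl in IHL. rewrite IHL. ring. Qed.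

Lemma csum_tail : forall (f : nat -> C) M L, (M <= L)%nat -> (forall k, (M <= k)%nat -> f k = 0%C) ->
  csum f L = csum f M.
Proof.
  intros f M L HL H; induction L.
  - replace M with O by lia; auto.
  - destruct (Nat.eq_dec M (S L)) as [->|]; auto.
    simpl. rewrite IHL by lia. rewrite H by lia. ring.
Qed.

Lemma csum_S : forall (f : nat -> C) L, csum f (S L) = (csum f L + f L)%C.
Proof. reflexivity. Qed.

Lemma csum_evenodd : forall (f : nat -> C) n, csum f (2 * n) =
  (csum (fun j => f (2 * j)%nat) n + csum (fun j => f (2 * j + 1)%nat) n)%C.
Proof.
  intros f n; induction n. simpl. ring.
  replace (2 * S n)%nat with (S (S (2 * n))) by lia.
  rewrite !csum_S. rewrite IHn.
  replace (2 * n + 1)%nat with (S (2 * n)) by lia. ring.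
Qed.

Lemma binom_sum : forall m (w : C) L, (m < L)%nat ->
  csum (fun k => RtoC (INR (bn m k)) * w ^ k)%C L = ((1 + w) ^ m)%C.
Proof.
  induction m; intros w L HL.
  -
    rewrite csum_tail with (M := 1%nat).
    + simpl. ring.
    + lia.
    + intros k Hk. destruct k; [lia|]. simpl. ring.
  - destruct L as [|L']; [lia|].
    rewrite csum_shift.
    rewrite (csum_ext _ (fun k => w * (RtoC (INR (bn m k)) * w ^ k)
               + RtoC (INR (bn m (S k))) * w ^ (S k))%C).
    2:{ intros k _. simpl bn. rewrite plus_INR. rewrite RtoC_plus. simpl Cpow. ring. }
    rewrite csum_plus, csum_scal.
    rewrite (IHm w L') by lia.
    assert (Hs := csum_shift (fun k => RtoC (INR (bn m k)) * w ^ k)%C L').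
    rewrite (IHm w (S L')) in Hs by lia.
    simpl bn in *. simpl Cpow in *.
    assert (E: (RtoC (INR 1) * 1 = 1)%C) by (simpl; ring).
    rewrite E in *.
    rewrite (Cplus_comm _ (csum _ _)) in *.
    assert (csum (fun k : nat => RtoC (INR (bn m (S k))) * (w * w ^ k))%C L' = ((1 + w) ^ m - 1)%C).
    { rewrite Hs, bn_0. simpl INR. ring. }
    rewrite H. ring.
Qed.

Lemma cexpi_plus : forall a b, cexpi (a + b) = (cexpi a * cexpi b)%C.
Proof.
  intros. unfold cexpi. apply injective_projections; simpl;
  [rewrite cos_plus | rewrite sin_plus]; ring.
Qed.

Lemma cexpi_0 : cexpi 0 = 1%C.
Proof. unfold cexpi. rewrite cos_0, sin_0. reflexivity. Qed.

Lemma cexpi_mult : forall k t, cexpi (INR k * t) = (cexpi t ^ k)%C.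
Proof.
  induction k; intros t.
  - simpl. rewrite Rmult_0_l. apply cexpi_0.
  - rewrite S_INR. replace ((INR k + 1) * t) with (t + INR k * t) by ring.
    rewrite cexpi_plus, IHk. reflexivity.
Qed.

Lemma Cmod_cexpi : forall t, Cmod (cexpi t) = 1.
Proof.
  intros. unfold Cmod, cexpi; simpl.
  replace (cos t * (cos t * 1) + sin t * (sin t * 1)) with ((sin t)² + (cos t)²) by (unfold Rsqr; ring).
  rewrite sin2_cos2. apply sqrt_1.
Qed.

Lemma abs_sin_le : forall x, Rabs (sin x) <= Rabs x.
Proof.
  assert (P : forall x, 0 <= x -> Rabs (sin x) <= x).
  { intros x Hx. destruct (Req_dec x 0) as [->|Hne].
    - rewrite sin_0, Rabs_R0. lra.
    - assert (sin x < x) by (apply sin_lt_x; lra).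
      destruct (Rle_lt_dec 1 x).
      + pose proof (SIN_bound x). apply Rabs_le. lra.
      + assert (0 <= sin x) by (apply sin_ge_0; pose proof PI2_3_2; lra).
        rewrite Rabs_pos_eq; lra. }
  intros x. destruct (Rle_dec 0 x).
  - rewrite (Rabs_pos_eq x) by lra. apply P; auto.
  - rewrite (Rabs_left x) by lra. rewrite <- (Ropp_involutive x) at 1.
    rewrite sin_neg, Rabs_Ropp. apply P. lra.
Qed.

Lemma Cmod_1_cexpi : forall t, Cmod (1 - cexpi t)%C <= Rabs t.
Proof.
  intros. unfold Cmod, cexpi; simpl.
  rewrite <- sqrt_Rsqr_abs. apply sqrt_le_1_alt.
  assert (Hc := cos_2a_sin (t/2)). replace (2*(t/2)) with t in Hc by field.
  pose proof (sin2_cos2 t).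
  pose proof (abs_sin_le (t/2)).
  assert (Rsqr (sin (t/2)) <= Rsqr (t/2)).
  { rewrite (Rsqr_abs (sin _)), (Rsqr_abs (t/2)). apply Rsqr_incr_1; auto; apply Rabs_pos. }
  unfold Rsqr in *. rewrite Hc in *. nra.
Qed.

Lemma RtoC_m1 : RtoC (-1) = Copp (RtoC 1).
Proof. unfold RtoC, Copp. simpl. f_equal; ring. Qed.

Lemma Cpow_neg : forall (u : C) k, ((- u) ^ k = RtoC ((-1) ^ k) * u ^ k)%C.
Proof.
  intros u k; induction k; simpl. ring. rewrite IHk. rewrite RtoC_mult. ring.
Qed.

Theorem theorem2p4 (Omega sigma m_min : R) (n : nat)
  (HOmega : 0 < Omega) (Hsigma : 0 < sigma) (Hsm : sigma <= m_min)
  (Hn : (2 <= n)%nat) :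
  let tau := exp (-1) / Omega * Rpower (sigma / m_min) (1 / (2 * INR n - 1)) in
  let y := fun j : nat => - (INR n - 1/2) * tau + 2 * INR j * tau in
  let yhat := fun j : nat => - (INR n - 3/2) * tau + 2 * INR j * tau in
  exists a ahat : nat -> R,
    (forall j, (j < n)%nat -> 0 < a j) /\
    (forall j, (j < n)%nat -> 0 < ahat j) /\
    (forall w, -Omega <= w <= Omega ->
       Cmod (fourier_discrete n ahat yhat w - fourier_discrete n a y w)%C < sigma) /\
    ((forall j, (j < n)%nat -> m_min <= Rabs (a j)) /\
     (exists j, (j < n)%nat /\ Rabs (a j) = m_min)).
Proof.
  intros tau y yhat.
  set (N := (2 * n - 1)%nat).
  set (a := fun j => m_min * INR (bn N (2 * j))).
  set (ah := fun j => m_min * INR (bn N (2 * j + 1))).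
  assert (Hm : 0 < m_min) by lra.
  assert (HINRN : INR N = 2 * INR n - 1).
  { unfold N. rewrite minus_INR by lia. rewrite mult_INR. simpl. ring. }
  assert (Hn2 : 2 <= INR n) by (replace 2 with (INR 2) by (simpl; ring); apply le_INR; lia).
  set (Rp := Rpower (sigma / m_min) (1 / (2 * INR n - 1))).
  assert (HRp : 0 < Rp) by (unfold Rp, Rpower; apply exp_pos).
  assert (Htau : 0 < tau).
  { unfold tau. fold Rp. pose proof (exp_pos (-1)).
    apply Rmult_lt_0_compat; auto. apply Rdiv_lt_0_compat; auto. }
  assert (Hb1 : forall k, (k <= N)%nat -> 1 <= INR (bn N k)).
  { intros k Hk. replace 1 with (INR 1) by reflexivity. apply le_INR. apply bn_pos; auto. }
  exists a, ah.
  split; [|split; [|split; [|split]]].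
  - intros j Hj. unfold a. pose proof (Hb1 (2*j)%nat ltac:(unfold N; lia)). nra.
  - intros j Hj. unfold ah. pose proof (Hb1 (2*j+1)%nat ltac:(unfold N; lia)). nra.
  - intros w Hw.
    set (E := cexpi (- (INR n - 1/2) * tau * w)).
    set (u := cexpi (tau * w)).
    assert (Hy : forall j, cexpi (y j * w) = (E * u ^ (2 * j))%C).
    { intros j. unfold E, u, y. rewrite <- cexpi_mult, <- cexpi_plus. f_equal.
      rewrite mult_INR. simpl INR. ring. }
    assert (Hyh : forall j, cexpi (yhat j * w) = (E * u ^ (2 * j + 1))%C).
    { intros j. unfold E, u, yhat. rewrite <- cexpi_mult, <- cexpi_plus. f_equal.
      rewrite plus_INR, mult_INR. simpl INR. field. }
    assert (Hb := binom_sum N (- u) (2 * n) ltac:(unfold N; lia)).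
    assert (Heo := csum_evenodd
      (fun k => RtoC m_min * E * (RtoC (INR (bn N k)) * (- u) ^ k))%C n).
    rewrite csum_scal, Hb in Heo.
    assert (HD : (fourier_discrete n ah yhat w - fourier_discrete n a y w)%C
                 = (- (RtoC m_min * E * (1 - u) ^ N))%C).
    { replace (1 - u)%C with (1 + - u)%C by ring. rewrite Heo.
      unfold fourier_discrete.
      rewrite (csum_ext (fun j => RtoC (ah j) * cexpi (yhat j * w))%C
        (fun j => - (RtoC m_min * E * (RtoC (INR (bn N (2 * j + 1))) * (- u) ^ (2 * j + 1))))%C).
      2:{ intros j _. rewrite Hyh, Cpow_neg. unfold ah. rewrite !Nat.add_1_r.
          rewrite pow_1_odd. rewrite RtoC_mult.
          rewrite RtoC_m1.
          ring. }
      rewrite (csum_ext (fun j => RtoC (a j) * cexpi (y j * w))%C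
        (fun j => (RtoC m_min * E * (RtoC (INR (bn N (2 * j))) * (- u) ^ (2 * j)))))%C.
      2:{ intros j _. rewrite Hy, Cpow_neg. rewrite pow_1_even. unfold a. rewrite RtoC_mult. ring. }
      set (s1 := csum _ n). set (s2 := csum _ n).
      assert (Hneg : forall (f : nat -> C) L, csum (fun k => - f k)%C L = (- csum f L)%C).
      { intros f L; induction L; simpl. ring. rewrite IHL. ring. }
      unfold s1. rewrite Hneg. fold s2. ring. }
    rewrite HD, Cmod_opp, !Cmod_mult, Cmod_R, Cmod_pow.
    unfold E. rewrite Cmod_cexpi, Rabs_pos_eq by lra.
    assert (Hu : Cmod (1 - u)%C <= tau * Omega).
    { unfold u. eapply Rle_trans. apply Cmod_1_cexpi.
      rewrite Rabs_mult, (Rabs_pos_eq tau) by lra.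
      apply Rmult_le_compat_l. lra. apply Rabs_le. lra. }
    assert (HtO : tau * Omega = exp (-1) * Rp) by (unfold tau; fold Rp; field; lra).
    assert (HRpN : Rp ^ N = sigma / m_min).
    { rewrite <- Rpower_pow by auto. unfold Rp. rewrite Rpower_mult, HINRN.
      replace (1 / (2 * INR n - 1) * (2 * INR n - 1)) with 1 by (field; lra).
      apply Rpower_1. apply Rdiv_lt_0_compat; lra. }
    assert (Hpow : Cmod (1 - u)%C ^ N <= (tau * Omega) ^ N).
    { apply pow_incr. split; auto. apply Cmod_ge_0. }
    rewrite HtO, Rpow_mult_distr, HRpN in Hpow.
    assert (He : 0 <= exp (-1) ^ N < 1).
    { apply pow_lt_1_compat; [|unfold N; lia]. split. left; apply exp_pos.
      rewrite <- exp_0. apply exp_increasing. lra. }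
    assert (m_min * 1 * Cmod (1 - u)%C ^ N <= m_min * (exp (-1) ^ N * (sigma / m_min))).
    { rewrite Rmult_1_r. apply Rmult_le_compat_l; lra. }
    replace (m_min * (exp (-1) ^ N * (sigma / m_min))) with (exp (-1) ^ N * sigma) in H
      by (field; lra).
    nra.
  - intros j Hj. unfold a. pose proof (Hb1 (2*j)%nat ltac:(unfold N; lia)).
    rewrite Rabs_pos_eq by nra. nra.
  - exists O. split. lia. unfold a. simpl (2 * 0)%nat. rewrite bn_0. simpl INR.
    rewrite Rmult_1_r. apply Rabs_pos_eq. lra.
Qed.
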